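(* Let $\Sigma_{g,m,n}$ be a compact oriented surface of genus $g$ with $m$ boundary components labeled $0$ and $n$ boundary components labeled $2$, and assume $(g,n)$ is such that the right-hand side below is defined ($g+n\ge 1$ or $(g,n)=(0,0)$). Then $$\dim V_{\Sigma_{g,m,n}}=5^{\frac{g-1}{2}}\left\{\left(\tfrac{1+\sqrt5}{2}\right)^{g+n-1}+(-1)^{g-1}\left(\tfrac{1-\sqrt5}{2}\right)^{g+n-1}\right\}.$$
   Context: The Fibonacci TQFT ($SO(3)$ Chern–Simons theory at $r=5$) assigns to each compact oriented surface $\Sigma$ whose boundary components are parametrized and labeled by elements of $\{0,2\}$ a finite-dimensional Hilbert space $V_\Sigma$, with: $V_{\Sigma_1\sqcup\Sigma_2}=V_{\Sigma_1}\otimes V_{\Sigma_2}$; for a simple closed curve $f$ in $\Sigma$, $V_\Sigma=V_{\Sigma_{f,0}}\oplus V_{\Sigma_{f,2}}$, where $\Sigma_{f,a}$ is $\Sigma$ cut along $f$ with both new boundary components labeled $a$; a disk labeled $a$ has $\dim=\delta_{0a}$; an annulus labeled $a,b$ has $\dim=\delta_{ab}$; a genus-0 surface with three boundary components labeled $a,b,c$ has $\dim=0$ if $a+b+c=2$ and $\dim=1$ otherwise. *)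

(* Defs.v *)
From Stdlib Require Import Reals ZArith Lia.
Open Scope R_scope.

(* A connected compact oriented surface with labeled boundary is determined
   up to homeomorphism by (g, m, n): genus g, m boundary components labeled 0,
   n boundary components labeled 2.  A disconnected surface is a disjoint union
   of such, with dimension the product (V of a disjoint union is the tensor
   product), so a dimension assignment is a function D g m n.

   Fib_dim_axioms D states the axioms of the context:
   - disk, annulus, pair of pants dimensions;
   - gluing along a non-separating simple closed curve in Sigma_{g+1,m,n}:
     cutting yields Sigma_{g,m+2,n} (label 0) or Sigma_{g,m,n+2} (label 2);
   - gluing along a separating simple closed curve in Sigma_{g1+g2,m1+m2,n1+n2}
     splitting it into pieces of genus g1 (with m1,n1 old boundaries) and g2
     (with m2,n2): cutting yields Sigma_{g1,m1+1,n1} ⊔ Sigma_{g2,m2+1,n2}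
     (label 0) or Sigma_{g1,m1,n1+1} ⊔ Sigma_{g2,m2,n2+1} (label 2). *)
Definition Fib_dim_axioms (D : nat -> nat -> nat -> nat) : Prop :=
  D 0%nat 1%nat 0%nat = 1%nat /\ D 0%nat 0%nat 1%nat = 0%nat /\
  D 0%nat 2%nat 0%nat = 1%nat /\ D 0%nat 1%nat 1%nat = 0%nat /\
  D 0%nat 0%nat 2%nat = 1%nat /\
  (* pairs of pants: dim 0 iff a+b+c = 2 *)
  D 0%nat 3%nat 0%nat = 1%nat /\ D 0%nat 2%nat 1%nat = 0%nat /\
  D 0%nat 1%nat 2%nat = 1%nat /\ D 0%nat 0%nat 3%nat = 1%nat /\
  (forall g m n, D (S g) m n = (D g (m + 2) n + D g m (n + 2))%nat) /\
  (forall g1 g2 m1 m2 n1 n2,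
      D (g1 + g2)%nat (m1 + m2)%nat (n1 + n2)%nat =
      (D g1 (S m1) n1 * D g2 (S m2) n2 + D g1 m1 (S n1) * D g2 m2 (S n2))%nat).

Definition fib_formula (g n : nat) : R :=
  Rpower 5 ((INR g - 1) / 2) *
  (powerRZ ((1 + sqrt 5) / 2) (Z.of_nat (g + n) - 1) +
   powerRZ (-1) (Z.of_nat g - 1) *
   powerRZ ((1 - sqrt 5) / 2) (Z.of_nat (g + n) - 1)).

(* Main.v *)
Require Import Defs.
From Stdlib Require Import Reals ZArith.
From Stdlib Require Import Lia Lra.
Open Scope R_scope.

Lemma sq5 : sqrt 5 * sqrt 5 = 5.
Proof. apply sqrt_sqrt; lra. Qed.

Lemma phi_nz : (1 + sqrt 5) / 2 <> 0.
Proof. pose proof (sqrt_pos 5); lra. Qed.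
Lemma psi_nz : (1 - sqrt 5) / 2 <> 0.
Proof. pose proof sq5 as Q. intro H. assert (E: sqrt 5 = 1) by lra. rewrite E in Q. lra. Qed.

Lemma pRZ_S x z : x <> 0 -> powerRZ x (z + 1) = powerRZ x z * x.
Proof. intro. rewrite powerRZ_add; auto. simpl. ring. Qed.

Lemma fib_n (g n : nat) : fib_formula g (n+2) = fib_formula g n + fib_formula g (S n).
Proof.
  unfold fib_formula.
  replace (Z.of_nat (g + (n+2)) - 1)%Z with ((Z.of_nat (g + n) - 1) + 1 + 1)%Z by lia.
  replace (Z.of_nat (g + S n) - 1)%Z with ((Z.of_nat (g + n) - 1) + 1)%Z by lia.
  rewrite !pRZ_S by (apply phi_nz || apply psi_nz).
  set (a := (1 + sqrt 5)/2). set (b := (1 - sqrt 5)/2).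
  set (A := powerRZ a _). set (B := powerRZ b _).
  set (C := Rpower _ _). set (s := powerRZ (-1) _).
  assert (ha : a*a = a+1) by (unfold a; pose proof sq5; nra).
  assert (hb : b*b = b+1) by (unfold b; pose proof sq5; nra).
  assert (E : C * (A*a*a + s*(B*b*b)) - (C*(A + s*B) + C*(A*a+s*(B*b)))
     = C*A*(a*a - a - 1) + C*s*B*(b*b-b-1)) by ring.
  rewrite ha, hb in E. replace (a+1-a-1) with 0 in E by ring.
  replace (b+1-b-1) with 0 in E by ring. lra.
Qed.

Lemma fib_g (g n : nat) : fib_formula (S g) n = fib_formula g n + fib_formula g (n+2).
Proof.
  unfold fib_formula.
  replace (Z.of_nat (g + (n+2)) - 1)%Z with ((Z.of_nat (g + n) - 1) + 1 + 1)%Z by lia.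
  replace (Z.of_nat (S g + n) - 1)%Z with ((Z.of_nat (g + n) - 1) + 1)%Z by lia.
  replace (Z.of_nat (S g) - 1)%Z with ((Z.of_nat g - 1) + 1)%Z by lia.
  replace ((INR (S g) - 1) / 2) with ((INR g - 1)/2 + /2) by (rewrite S_INR; field).
  rewrite Rpower_plus, Rpower_sqrt by lra.
  rewrite !pRZ_S by (apply phi_nz || apply psi_nz || lra).
  set (a := (1 + sqrt 5)/2). set (b := (1 - sqrt 5)/2).
  set (A := powerRZ a _). set (B := powerRZ b _).
  set (C := Rpower _ _). set (s := powerRZ (-1) _).
  set (r := sqrt 5).
  assert (ha : r*a = a*a+1) by (unfold a, r; pose proof sq5; nra).
  assert (hb : - (r*b) = b*b+1) by (unfold b, r; pose proof sq5; nra).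
  assert (E : C * r * (A*a + s * (-1) * (B*b)) - (C*(A + s*B) + C*(A*a*a+s*(B*b*b)))
     = C*A*(r*a - (a*a+1)) + C*s*B*(-(r*b) - (b*b+1))) by ring.
  rewrite ha, hb in E. replace (a*a+1-(a*a+1)) with 0 in E by ring.
  replace (b*b+1-(b*b+1)) with 0 in E by ring. lra.
Qed.

Theorem lemma6p1 (D : nat -> nat -> nat -> nat) (HD : Fib_dim_axioms D)
  (g m n : nat) (Hgn : (1 <= g + n)%nat \/ (g = 0%nat /\ n = 0%nat)) :
  INR (D g m n) = fib_formula g n.
Proof.
  clear Hgn.
  destruct HD as (h010 & h001 & h020 & h011 & h002 & h030 & h021 & h012 & h003 & HN & HS).
  assert (Dm1 : forall g m n, D g (S m) n = D g m n).
  { intros g0 m0 n0. pose proof (HS g0 0%nat m0 0%nat n0 0%nat) as E.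
    rewrite !Nat.add_0_r, h010, h001 in E. lia. }
  assert (Dm : forall g m n, D g m n = D g 0%nat n).
  { intros g0 m0 n0. induction m0; auto. rewrite Dm1. auto. }
  assert (Dn : forall g m n, D g m (n+2)%nat = (D g m n + D g m (S n))%nat).
  { intros g0 m0 n0. pose proof (HS g0 0%nat m0 0%nat n0 2%nat) as E.
    rewrite !Nat.add_0_r, h012, h003, Dm1 in E. lia. }
  assert (h000 : D 0%nat 0%nat 0%nat = 1%nat).
  { pose proof (HS 0%nat 0%nat 0%nat 0%nat 0%nat 0%nat) as E. simpl in E.
    rewrite h010, h001 in E. lia. }
  revert m n. induction g as [|g IH]; intros m n.
  - assert (P : forall n, (forall m, INR (D 0%nat m n) = fib_formula 0%nat n) /\
                          (forall m, INR (D 0%nat m (S n)) = fib_formula 0%nat (S n))).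
    { induction n0 as [|k [IH1 IH2]].
      - split; intro m0; rewrite Dm.
        + rewrite h000. unfold fib_formula. simpl.
          replace ((0 - 1) / 2) with (- / 2) by field.
          rewrite Rpower_Ropp, Rpower_sqrt by lra.
          pose proof sq5. pose proof psi_nz. pose proof phi_nz.
          assert (Hp : 0 < sqrt 5) by (apply sqrt_lt_R0; lra).
          field_simplify; [| repeat split; lra].
          replace (sqrt 5 ^ 3) with (5 * sqrt 5) by (simpl; nra). field. lra.
        + rewrite h001. unfold fib_formula. simpl. lra.
      - split; auto. intro m0. replace (S (S k)) with (k+2)%nat by lia.
        rewrite Dn, plus_INR, IH1, IH2, fib_n. reflexivity. }
    apply P.
  - rewrite HN, plus_INR, IH, IH, fib_g. reflexivity.
Qed.
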